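(* For all integers $n\ge 0$, all $\mathbf{s}=(s_1,\dots,s_d)\in\mathbb{N}^d$ and all $y\in[-\pi/2,\pi/2]$, \[ \sum_{n_1>\cdots>n_d>n}\frac{a_{n_1}(\sin y)}{(2n_1)^{s_1}\cdots(2n_d)^{s_d}} =\cot y\,\frac{d}{dy}\int_0^y p_{s_1}\circ\cdots\circ p_{s_d}\circ a_n(\sin t)\tan t\,dt , \] where for $y=\pm\pi/2$ the right-hand side is understood as the limit as $y\to\pm\pi/2$.
   Context: $\mathbb{N}=\{1,2,\dots\}$. Set $a_0(x)=1$ and $a_n(x)=\frac{1}{4^n}\binom{2n}{n}x^{2n}$ for $n\ge1$. Iterated integral notation: for 1-forms $f_1(t)dt,\dots,f_r(t)dt$, $\int_0^y f_1(t)dt\circ\cdots\circ f_r(t)dt:=\int_{y>t_1>\cdots>t_r>0}f_1(t_1)\cdots f_r(t_r)\,dt_1\cdots dt_r$ (the symbol $\circ$ may be omitted); $(\omega)^k$ denotes $\omega$ repeated $k$ times ($k=0$: empty). Words mixing functions and 1-forms are expanded by linearity using the rule that for functions $F,G$ and 1-forms $f\,dt$, $g\,dt$: $[F+f\,dt\circ G]\circ g\,dt:=F g\,dt+f\,dt\circ (Gg)\,dt$; i.e. a function placed after $\circ$ multiplies the 1-form that follows it. For $s\in\mathbb{N}$ define $p_s(t):=\tan t\,dt\,\left(\cot t\,dt\right)^{s-1}\left(1-\csc t\,dt\circ\sec t\right)$. *)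

(* Defs.v *)
From Stdlib Require Import Reals List.
From Coquelicot Require Import Coquelicot.
Import ListNotations.
Open Scope R_scope.

Definition a_coef (n : nat) (x : R) : R :=
  / 4 ^ n * Binomial.C (2 * n) n * x ^ (2 * n).

(* Multiple sum  sum_{n_1 > ... > n_d > m} a_{n_1}(x) / ((2n_1)^{s_1} ... (2n_d)^{s_d}),
   computed with the index list given in REVERSED order [s_d; ...; s_1]. *)
Fixpoint msum_rev (l : list nat) (x : R) (m : nat) : R :=
  match l with
  | [] => a_coef m x
  | s :: l' => Series (fun j => let k := (m + 1 + j)%nat in
                  msum_rev l' x k / (2 * INR k) ^ s)
  end.

Definition msum (s : list nat) (x : R) (n : nat) : R := msum_rev (rev s) x n.

Definition cotf (t : R) : R := cos t / sin t.
Definition cscf (t : R) : R := / sin t.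
Definition secf (t : R) : R := / cos t.

(* A word of 1-forms f_1(t)dt ... f_r(t)dt is a list [f_1; ...; f_r].
   Iterated (oriented) integral:
   iint [] y = 1,  iint (f :: w) y = int_0^y f(t) * iint w t dt. *)
Fixpoint iint (w : list (R -> R)) (y : R) : R :=
  match w with
  | [] => 1
  | f :: w' => RInt (fun t => f t * iint w' t) 0 y
  end.

Definition mulhead (g : R -> R) (w : list (R -> R)) : list (R -> R) :=
  match w with
  | [] => []
  | h :: w' => (fun t => g t * h t) :: w'
  end.

(* Linear expansion of p_{s_1} o ... o p_{s_d} o (g(t) dt) into a signed
   list of words, where
   p_s = tan dt (cot dt)^{s-1} (1 - csc dt o sec), the trailing function
   sec multiplying the following 1-form. *)
Fixpoint expand (s : list nat) (g : R -> R) : list (R * list (R -> R)) :=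
  match s with
  | [] => [(1, [g])]
  | k :: s' =>
      let W := expand s' g in
      let pre := tan :: repeat cotf (k - 1) in
      map (fun cw => (fst cw, pre ++ snd cw)) W ++
      map (fun cw => (- fst cw, pre ++ cscf :: mulhead secf (snd cw))) W
  end.

Definition lin_iint (L : list (R * list (R -> R))) (y : R) : R :=
  fold_right (fun cw acc => fst cw * iint (snd cw) y + acc) 0 L.

Definition rhs (s : list nat) (n : nat) (y : R) : R :=
  cotf y * Derive (lin_iint (expand s (fun t => a_coef n (sin t) * tan t))) y.

(* Main.v *)
Require Import Defs.
From Stdlib Require Import Reals List Lra Lia Arith.
From Coquelicot Require Import Coquelicot.
Import ListNotations.
Open Scope R_scope.

Fixpoint sm (f : nat -> R) (n : nat) : R :=
  match n with O => 0 | S k => sm f k + f k end.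

Lemma sm_ext f g n : (forall i, (i < n)%nat -> f i = g i) -> sm f n = sm g n.
Proof. induction n; simpl; intros H; auto. rewrite IHn by (intros; apply H; lia). rewrite H by lia. auto. Qed.

Lemma sm_scal c f n : sm (fun i => c * f i) n = c * sm f n.
Proof. induction n; simpl; [ring|]. rewrite IHn; ring. Qed.

Lemma sm_plus f g n : sm (fun i => f i + g i) n = sm f n + sm g n.
Proof. induction n; simpl; [ring|]. rewrite IHn; ring. Qed.

Lemma sm_nonneg f n : (forall i, 0 <= f i) -> 0 <= sm f n.
Proof. intros H; induction n; simpl; [lra|]. specialize (H n); lra. Qed.

Lemma sm_mono f a b : (forall i, 0 <= f i) -> (a <= b)%nat -> sm f a <= sm f b.
Proof. intros H Hab. induction Hab; [lra|]. simpl. specialize (H m); lra. Qed.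

Lemma sm_tail f n b : (forall i, (n <= i)%nat -> f i = 0) -> (n <= b)%nat -> sm f b = sm f n.
Proof. intros H Hb. induction Hb; auto. simpl. rewrite IHHb, H by lia. ring. Qed.

Lemma sm_fubini (g : nat -> nat -> R) J K :
  sm (fun j => sm (g j) K) J = sm (fun N => sm (fun j => g j N) J) K.
Proof.
  induction J; simpl.
  - induction K; simpl; auto. rewrite <- IHK; ring.
  - rewrite IHJ. rewrite <- sm_plus. auto.
Qed.

Lemma sm_zero f n : (forall i, (i < n)%nat -> f i = 0) -> sm f n = 0.
Proof. intros H. induction n; simpl; auto. rewrite IHn, H. ring. lia. intros; apply H; lia. Qed.

Lemma sm_single f m n : (forall i, i <> m -> f i = 0) -> (m < n)%nat -> sm f n = f m.
Proof.
  intros H Hmn. induction Hmn; simpl.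
  - rewrite (sm_zero f m). ring. intros; apply H; lia.
  - rewrite IHHmn, (H m0) by lia. ring.
Qed.



Lemma sm_le f g n : (forall i, f i <= g i) -> sm f n <= sm g n.
Proof. intros H; induction n; simpl; [lra|]. specialize (H n); lra. Qed.

Lemma sum_n_sm a n : sum_n a n = sm a (S n).
Proof.
  induction n. rewrite sum_O. simpl. rewrite Rplus_0_l. reflexivity.
  rewrite sum_Sn, IHn. simpl. unfold plus; simpl. reflexivity.
Qed.

Lemma is_series_sm a l : is_series a l <-> is_lim_seq (sm a) l.
Proof.
  split; intros H.
  - apply is_lim_seq_incr_1. apply (is_lim_seq_ext (sum_n a)). intros; apply sum_n_sm. exact H.
  - apply is_lim_seq_incr_1 in H. apply (is_lim_seq_ext _ (sum_n a)) in H. exact H.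
    intros; symmetry; apply sum_n_sm.
Qed.

Lemma sm_le_lim f l J : is_series f l -> (forall n, 0 <= f n) -> sm f J <= l.
Proof.
  intros H Hp. apply is_series_sm in H.
  apply (is_lim_seq_incr_n _ J) in H.
  assert (Rbar_le (sm f J) l).
  { apply (is_lim_seq_le (fun _ => sm f J) (fun n => sm f (n + J))).
    intros; apply sm_mono; auto; lia. apply is_lim_seq_const. auto. }
  simpl in H0; auto.
Qed.

Lemma is_series_single f m : (forall i, i <> m -> f i = 0) -> is_series f (f m).
Proof.
  intros H. apply is_series_sm. apply (is_lim_seq_incr_n _ (S m)).
  apply (is_lim_seq_ext (fun _ => f m)). intros n. symmetry; apply sm_single; auto; lia.
  apply is_lim_seq_const.
Qed.

Lemma sm_lim_fin (g : nat -> nat -> R) (v : nat -> R) J :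
  (forall j, is_lim_seq (g j) (v j)) -> is_lim_seq (fun K => sm (fun j => g j K) J) (sm v J).
Proof.
  intros H. induction J; simpl. apply is_lim_seq_const.
  apply is_lim_seq_plus'; auto.
Qed.

Lemma tonelli (g : nat -> nat -> R) (v : nat -> R) :
  (forall j N, 0 <= g j N) -> (forall j N, (N < j)%nat -> g j N = 0) ->
  (forall j, is_series (g j) (v j)) ->
  ex_series (fun N => sm (fun j => g j N) (S N)) ->
  is_series v (Series (fun N => sm (fun j => g j N) (S N))).
Proof.
  intros Hp Hz Hs Hd.
  set (d := fun N => sm (fun j => g j N) (S N)).
  assert (Hd' : is_series d (Series d)) by (apply Series_correct; auto).
  set (T := Series d) in *.
  assert (dp : forall N, 0 <= d N) by (intros; apply sm_nonneg; auto).
  assert (vp : forall j, 0 <= v j).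
  { intros j. specialize (sm_le_lim _ _ 0 (Hs j) (Hp j)). simpl. auto. }
  assert (dJ : forall N J, (N < J)%nat -> d N = sm (fun j => g j N) J).
  { intros N J H. unfold d. symmetry. apply sm_tail. intros; apply Hz; lia. lia. }
  assert (A : forall J, sm d J = sm (fun j => sm (g j) J) J).
  { intros J. rewrite sm_fubini. apply sm_ext. intros; apply dJ; auto. }
  assert (B : forall J, sm d J <= sm v J).
  { intros J. rewrite A. apply sm_le. intros j. apply sm_le_lim; auto. }
  assert (C : forall J, sm v J <= T).
  { intros J.
    assert (Hl : is_lim_seq (fun K => sm (fun j => sm (g j) K) J) (sm v J)).
    { apply sm_lim_fin. intros j. apply is_series_sm. auto. }
    assert (Rbar_le (sm v J) T).
    { apply (is_lim_seq_le (fun K => sm (fun j => sm (g j) K) J) (fun _ => T) _ _ ); [|exact Hl| apply is_lim_seq_const].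
      intros K. rewrite sm_fubini.
      apply Rle_trans with (sm d K); [|apply sm_le_lim; auto].
      apply sm_le. intros N. unfold d.
      destruct (le_lt_dec J (S N)).
      - apply sm_mono; auto.
      - right. apply sm_tail. intros; apply Hz; lia. lia. }
    simpl in H; auto. }
  apply is_series_sm. apply is_series_sm in Hd'.
  apply (is_lim_seq_le_le (sm d) _ (fun _ => T)); auto.
  apply is_lim_seq_const.
Qed.

Lemma sm_S f n : sm f (S n) = sm f n + f n.
Proof. reflexivity. Qed.
Lemma sm_0 f : sm f 0 = 0.
Proof. reflexivity. Qed.
Arguments sm : simpl never.

Definition alpha (N : nat) : R := / 4 ^ N * Binomial.C (2 * N) N.

Lemma alpha_0 : alpha 0 = 1.
Proof. unfold alpha, Binomial.C. simpl. field. Qed.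

Lemma alpha_S N : alpha (S N) = alpha N * (2 * INR N + 1) / (2 * INR N + 2).
Proof.
  unfold alpha, Binomial.C.
  replace (2 * S N)%nat with (S (S (2 * N))) by lia.
  replace (S (S (2 * N)) - S N)%nat with (S N) by lia.
  replace (2 * N - N)%nat with N by lia.
  rewrite !fact_simpl. rewrite !mult_INR. rewrite !S_INR. rewrite mult_INR. simpl (INR 2).
  assert (0 < INR (fact N)) by (apply lt_0_INR, lt_O_fact).
  assert (0 < INR (fact (2*N))) by (apply lt_0_INR, lt_O_fact).
  assert (0 <= INR N) by apply pos_INR.
  simpl pow. field. repeat split; try lra. apply pow_nonzero; lra.
Qed.

Lemma alpha_pos N : 0 < alpha N.
Proof.
  induction N. rewrite alpha_0; lra. rewrite alpha_S.
  assert (0 <= INR N) by apply pos_INR. unfold Rdiv.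
  apply Rmult_lt_0_compat. apply Rmult_lt_0_compat; lra. apply Rinv_0_lt_compat; lra.
Qed.

Lemma alpha_le1 N : alpha N <= 1.
Proof.
  induction N. rewrite alpha_0; lra. rewrite alpha_S.
  assert (0 <= INR N) by apply pos_INR. pose proof (alpha_pos N).
  apply Rle_trans with (alpha N); auto.
  unfold Rdiv. rewrite Rmult_assoc. rewrite <- (Rmult_1_r (alpha N)) at 2.
  apply Rmult_le_compat_l; try lra.
  apply Rmult_le_reg_r with (2 * INR N + 2); try lra.
  rewrite Rmult_assoc, Rinv_l by lra. lra.
Qed.

Lemma a_coef_alpha N x : a_coef N x = alpha N * (x ^ 2) ^ N.
Proof. unfold a_coef, alpha. rewrite <- pow_mult. reflexivity. Qed.

Fixpoint Dc (l : list nat) (m N : nat) : R :=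
  match l with
  | [] => if Nat.eqb N m then 1 else 0
  | s :: l' => sm (fun j => Dc l' (m + 1 + j) N / (2 * INR (m + 1 + j)) ^ s) (S N)
  end.

Lemma D_nonneg l m N : 0 <= Dc l m N.
Proof.
  revert m. induction l; intros m; simpl.
  - destruct (Nat.eqb N m); lra.
  - apply sm_nonneg. intros j. unfold Rdiv. apply Rmult_le_pos; auto.
    left. apply Rinv_0_lt_compat. apply pow_lt.
    assert (0 < INR (m+1+j)) by (apply lt_0_INR; lia). lra.
Qed.

Lemma D_supp l m N : (N < m)%nat -> Dc l m N = 0.
Proof.
  revert m. induction l; intros m H; simpl.
  - destruct (Nat.eqb_spec N m); auto. lia.
  - apply sm_zero. intros i _. rewrite IHl by lia. unfold Rdiv; ring.
Qed.

Lemma D_app l k m N : Dc (l ++ [k]) m N = sm (Dc l m) N / (2 * INR N) ^ k.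
Proof.
  revert m. induction l; intros m; simpl.
  - destruct (le_lt_dec N m).
    + rewrite sm_zero. rewrite sm_zero. unfold Rdiv; ring.
      intros i Hi. destruct (Nat.eqb_spec i m); auto; lia.
      intros i Hi. destruct (Nat.eqb_spec N (m+1+i)); [lia|]. unfold Rdiv; ring.
    + rewrite (sm_single _ (N - m - 1)).
      rewrite (sm_single _ m).
      * rewrite Nat.eqb_refl. replace (m + 1 + (N - m - 1))%nat with N by lia.
        rewrite Nat.eqb_refl. reflexivity.
      * intros i Hi. destruct (Nat.eqb_spec i m); auto; lia.
      * auto.
      * intros i Hi. destruct (Nat.eqb_spec N (m+1+i)); [lia|]. unfold Rdiv; ring.
      * lia.
  -
    rewrite (sm_ext _ (fun j => sm (fun n => Dc l (m+1+j) n / (2 * INR (m+1+j)) ^ a / (2 * INR N) ^ k) N)).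
    2:{ intros j _. rewrite IHl. unfold Rdiv. rewrite Rmult_assoc, Rmult_comm, <- sm_scal.
        apply sm_ext. intros; ring. }
    rewrite sm_fubini.
    match goal with |- _ = sm ?F N / ?c => transitivity (sm (fun n => / c * F n) N) end.
    2:{ rewrite sm_scal. unfold Rdiv. ring. }
    apply sm_ext. intros n Hn.
    rewrite (sm_tail _ (S n)).
    + rewrite <- sm_scal. apply sm_ext. intros; unfold Rdiv; ring.
    + intros i Hi. rewrite D_supp by lia. unfold Rdiv; ring.
    + lia.
Qed.

Lemma sm_le_const f c n : (forall i, f i <= c) -> sm f n <= INR n * c.
Proof. intros H. induction n. rewrite sm_0; simpl; lra. rewrite sm_S, S_INR. specialize (H n). lra. Qed.

Lemma pow_ge_base (x : R) k : 1 <= x -> (1 <= k)%nat -> x <= x ^ k.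
Proof.
  intros Hx Hk. induction Hk. simpl; lra. simpl.
  assert (1 <= x ^ m) by (apply pow_R1_Rle; lra). nra.
Qed.

Lemma div_pow_le (a x : R) k : 0 <= a -> 1 <= x -> (1 <= k)%nat -> a / x ^ k <= a / x.
Proof.
  intros Ha Hx Hk. unfold Rdiv. apply Rmult_le_compat_l; auto.
  apply Rinv_le_contravar. lra. apply pow_ge_base; auto.
Qed.

Lemma D_le1 l m N : List.Forall (fun k => (1 <= k)%nat) l -> Dc l m N <= 1.
Proof.
  revert N. induction l using List.rev_ind; intros N H.
  - simpl. destruct (Nat.eqb N m); lra.
  - apply Forall_app in H. destruct H as [H1 H2]. inversion H2; subst.
    rewrite D_app. destruct N.
    + rewrite sm_0. unfold Rdiv; rewrite Rmult_0_l; lra.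
    + assert (HI : 1 <= INR (S N)) by (apply (le_INR 1); lia).
      apply Rle_trans with (sm (Dc l m) (S N) / (2 * INR (S N))).
      apply div_pow_le; auto. apply sm_nonneg; intros; apply D_nonneg. lra.
      apply Rle_trans with (INR (S N) * 1 / (2 * INR (S N))).
      unfold Rdiv. apply Rmult_le_compat_r. left; apply Rinv_0_lt_compat; lra.
      apply sm_le_const. intros; apply IHl; auto.
      apply Rmult_le_reg_r with (2 * INR (S N)). lra.
      unfold Rdiv. rewrite Rmult_assoc, Rinv_l by lra. lra.
Qed.

Fixpoint gam (N : nat) : R :=
  match N with O => 1 | S n => gam n * (4 * INR n + 1) / (4 * INR n + 4) end.

Lemma gam_pos N : 0 < gam N.
Proof.
  induction N; simpl. lra. assert (0 <= INR N) by apply pos_INR.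
  unfold Rdiv. apply Rmult_lt_0_compat. apply Rmult_lt_0_compat; lra. apply Rinv_0_lt_compat; lra.
Qed.

Lemma sm_gam N : sm gam N = 4 * INR N * gam N.
Proof.
  induction N. rewrite sm_0. simpl. ring.
  rewrite sm_S, IHN. simpl gam. rewrite S_INR. assert (0 <= INR N) by apply pos_INR.
  field. lra.
Qed.

Lemma D_le_gam l m : List.Forall (fun k => (1 <= k)%nat) l ->
  exists B, 0 <= B /\ forall N, Dc l m N <= B * gam N.
Proof.
  induction l using List.rev_ind; intros H.
  - exists (/ gam m). split. left; apply Rinv_0_lt_compat, gam_pos.
    intros N. simpl. destruct (Nat.eqb_spec N m).
    + subst. rewrite Rinv_l. lra. apply Rgt_not_eq, gam_pos.
    + apply Rmult_le_pos. left; apply Rinv_0_lt_compat, gam_pos. left; apply gam_pos.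
  - apply Forall_app in H. destruct H as [H1 H2]. inversion H2; subst.
    destruct (IHl H1) as [B [HB HBN]].
    exists (2 * B). split. lra. intros N. rewrite D_app. destruct N.
    + rewrite sm_0. unfold Rdiv; rewrite Rmult_0_l. pose proof (gam_pos 0). nra.
    + assert (HI : 1 <= INR (S N)) by (apply (le_INR 1); lia).
      apply Rle_trans with (sm (Dc l m) (S N) / (2 * INR (S N))).
      apply div_pow_le; auto. apply sm_nonneg; intros; apply D_nonneg. lra.
      apply Rle_trans with (sm (fun i => B * gam i) (S N) / (2 * INR (S N))).
      unfold Rdiv. apply Rmult_le_compat_r. left; apply Rinv_0_lt_compat; lra.
      apply sm_le. auto.
      rewrite sm_scal, sm_gam. right. field. lra.
Qed.

Lemma ex_series_alpha_gam : ex_series (fun N => alpha N * gam N).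
Proof.
  set (d := fun N => alpha N * gam N).
  assert (dp : forall N, 0 < d N) by (intros; apply Rmult_lt_0_compat; [apply alpha_pos|apply gam_pos]).
  assert (key : forall N, (1 <= N)%nat -> d N + 16 * INR (S N) * d (S N) <= 16 * INR N * d N).
  { intros N HN. unfold d. rewrite alpha_S. simpl gam. rewrite S_INR.
    assert (HI : 1 <= INR N) by (apply (le_INR 1); lia).
    pose proof (alpha_pos N). pose proof (gam_pos N).
    set (a := alpha N) in *. set (g := gam N) in *. set (n := INR N) in *.
    assert (E : a * (2 * n + 1) / (2 * n + 2) * (g * (4 * n + 1) / (4 * n + 4)) =
                a * g * ((2*n+1)*(4*n+1)) / (8 * (n+1) * (n+1))) by (field; lra).
    rewrite E. clear E.
    apply Rmult_le_reg_r with (8 * (n+1)). lra.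
    replace ((a * g + 16 * (n + 1) * (a * g * ((2 * n + 1) * (4 * n + 1)) / (8 * (n + 1) * (n + 1)))) * (8 * (n + 1)))
      with (a * g * (8 * (n+1) + 16 * ((2*n+1)*(4*n+1)))) by (field; lra).
    assert (0 < a * g) by (apply Rmult_lt_0_compat; auto).
    assert (0 <= a * g * (n - 1)) by (apply Rmult_le_pos; lra).
    match goal with |- ?L <= ?R => assert (R - L = 24 * (a * g * (n - 1))) by ring end.
    lra. }
  assert (bnd : forall K, sm d (S (S K)) + 16 * INR (S (S K)) * d (S (S K)) <= d 0%nat + 16 * d 1%nat + 16 * d 1%nat).
  { induction K.
    - rewrite !sm_S, sm_0. pose proof (key 1%nat (le_n 1)). pose proof (dp 1%nat). simpl INR in *. lra.
    - rewrite sm_S. pose proof (key (S (S K)) ltac:(lia)). lra. }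
  assert (Hf : ex_finite_lim_seq (sm d)).
  { apply ex_finite_lim_seq_incr with (d 0%nat + 16 * d 1%nat + 16 * d 1%nat).
    intros n. rewrite sm_S. specialize (dp n). lra.
    intros n. apply Rle_trans with (sm d (S (S n))).
    apply sm_mono; [intros; left; auto| lia].
    specialize (bnd n). pose proof (dp (S (S n))). pose proof (pos_INR (S (S n))).
    assert (0 <= 16 * INR (S (S n)) * d (S (S n))) by (apply Rmult_le_pos; lra). lra. }
  destruct Hf as [l Hl]. exists l. apply is_series_sm. exact Hl.
Qed.

Lemma pow_le1 y N : 0 <= y <= 1 -> 0 <= y ^ N <= 1.
Proof. intros H. induction N; simpl; [lra|]. nra. Qed.

Lemma a_coef_bounds N x : x ^ 2 <= 1 -> 0 <= a_coef N x <= alpha N.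
Proof.
  intros Hx. rewrite a_coef_alpha. pose proof (alpha_pos N).
  assert (0 <= x ^ 2) by (rewrite <- Rsqr_pow2; apply Rle_0_sqr).
  pose proof (pow_le1 (x^2) N ltac:(lra)). nra.
Qed.

Lemma inv_pow_pos (k : nat) s : 0 < / (2 * INR (S k)) ^ s.
Proof.
  apply Rinv_0_lt_compat, pow_lt. pose proof (pos_INR k). rewrite S_INR. lra.
Qed.

Lemma interchange l : List.Forall (fun k => (1 <= k)%nat) l -> forall m x, x ^ 2 <= 1 ->
  is_series (fun N => a_coef N x * Dc l m N) (msum_rev l x m).
Proof.
  intros Hl. induction l as [|s l IH]; intros m x Hx.
  - simpl. replace (a_coef m x) with (a_coef m x * (if Nat.eqb m m then 1 else 0)).
    apply (is_series_single (fun N => a_coef N x * (if Nat.eqb N m then 1 else 0))).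
    intros i Hi. destruct (Nat.eqb_spec i m); [lia|ring].
    rewrite Nat.eqb_refl; ring.
  - inversion Hl as [|? ? Hs Hl']; subst.
    specialize (IH Hl').
    change (msum_rev (s :: l) x m) with
      (Series (fun j => msum_rev l x (m + 1 + j) / (2 * INR (m + 1 + j)) ^ s)).
    set (g := fun j N => a_coef N x * Dc l (m + 1 + j) N / (2 * INR (m + 1 + j)) ^ s).
    assert (diag : forall N, sm (fun j => g j N) (S N) = a_coef N x * Dc (s :: l) m N).
    { intros N. unfold g. simpl Dc. rewrite <- sm_scal. apply sm_ext. intros; unfold Rdiv; ring. }
    assert (Hex : ex_series (fun N => sm (fun j => g j N) (S N))).
    { destruct (D_le_gam (s :: l) m Hl) as [B [HB HBN]].
      apply (@ex_series_le R_AbsRing R_CompleteNormedModule _ (fun N => B * (alpha N * gam N))).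
      - intros N. rewrite diag. change (norm ?z) with (Rabs z).
        pose proof (a_coef_bounds N x Hx). pose proof (D_nonneg (s::l) m N).
        rewrite Rabs_pos_eq by (apply Rmult_le_pos; lra). specialize (HBN N). pose proof (gam_pos N).
        pose proof (alpha_pos N).
        apply Rle_trans with (alpha N * Dc (s :: l) m N).
        apply Rmult_le_compat_r; lra.
        replace (B * (alpha N * gam N)) with (alpha N * (B * gam N)) by ring.
        apply Rmult_le_compat_l; lra.
      - exact (@ex_series_scal_l R_AbsRing R_NormedModule B _ ex_series_alpha_gam). }
    assert (T : is_series (fun j => msum_rev l x (m + 1 + j) / (2 * INR (m + 1 + j)) ^ s)
                  (Series (fun N => sm (fun j => g j N) (S N)))).
    { apply tonelli; auto.
      + intros j N. unfold g. pose proof (a_coef_bounds N x Hx). pose proof (D_nonneg l (m+1+j) N).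
        unfold Rdiv. pose proof (inv_pow_pos (m+j) s).
        replace (S (m + j)) with (m+1+j)%nat in H1 by lia. apply Rmult_le_pos; [apply Rmult_le_pos|]; lra.
      + intros j N HN. unfold g. rewrite D_supp by lia. unfold Rdiv; ring.
      + intros j. unfold g. specialize (IH (m+1+j)%nat x Hx).
        apply (is_series_scal_r (/ (2 * INR (m + 1 + j)) ^ s)) in IH.
        exact IH. }
    rewrite (is_series_unique _ _ T).
    apply Series_correct in Hex.
    eapply is_series_ext; [|exact Hex]. intros N; apply diag.
Qed.

Definition Iv (t : R) : Prop := - (PI / 2) < t < PI / 2.
Definition Fb (b : nat -> R) (y : R) : R := PSeries b (sin y ^ 2).
Definition rad1 (b : nat -> R) : Prop := Rbar_le 1 (CV_radius b).

Lemma rad1_bound b : (forall N, Rabs (b N) <= INR (S N)) -> rad1 b.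
Proof.
  intros Hb. unfold rad1.
  set (c1 := fun _ : nat => 1).
  assert (H1 : Rbar_le 1 (CV_radius c1)).
  { destruct (CV_radius_bounded c1) as [Hub _]. apply Hub. exists 1. intros n.
    unfold c1. rewrite pow1, Rmult_1_l, Rabs_R1. lra. }
  rewrite <- CV_radius_derive in H1.
  eapply Rbar_le_trans; [exact H1|].
  apply (is_lub_Rbar_subset (fun r => exists M, forall n, Rabs (b n * r ^ n) <= M)
    (fun r => exists M, forall n, Rabs (PS_derive c1 n * r ^ n) <= M)).
  - intros r [M HM]. exists M. intros n. specialize (HM n).
    unfold PS_derive, c1 in HM. rewrite Rmult_1_r in HM.
    rewrite Rabs_mult in *. apply Rle_trans with (2 := HM).
    apply Rmult_le_compat_r. apply Rabs_pos.
    rewrite (Rabs_pos_eq (INR (S n))) by apply pos_INR. auto.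
  - apply CV_radius_bounded.
  - apply CV_radius_bounded.
Qed.

Lemma I_cos t : Iv t -> 0 < cos t.
Proof. intros [H1 H2]. apply cos_gt_0; auto. Qed.

Lemma I_sin2 t : Iv t -> 0 <= sin t ^ 2 < 1.
Proof.
  intros H. pose proof (I_cos t H). pose proof (sin2_cos2 t). unfold Rsqr in H1.
  split. nra. nra.
Qed.

Lemma I_inside b t : rad1 b -> Iv t -> Rbar_lt (Rabs (sin t ^ 2)) (CV_radius b).
Proof.
  intros Hb Ht. apply Rbar_lt_le_trans with 1; auto.
  simpl. pose proof (I_sin2 t Ht). rewrite Rabs_pos_eq; lra.
Qed.

Lemma I_seg y x : Iv y -> Rmin 0 y <= x <= Rmax 0 y -> Iv x.
Proof.
  unfold Iv. intros H1 H2. pose proof PI_RGT_0.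
  unfold Rmin, Rmax in H2. destruct (Rle_dec 0 y); lra.
Qed.

Lemma I_0 : Iv 0.
Proof. unfold Iv. pose proof PI_RGT_0. lra. Qed.

Lemma I_open t : Iv t -> locally t Iv.
Proof.
  intros [H1 H2].
  assert (He : 0 < Rmin (t + PI/2) (PI/2 - t)) by (apply Rmin_glb_lt; lra).
  exists (mkposreal _ He). intros u Hu. unfold ball in Hu; simpl in Hu.
  unfold AbsRing_ball, abs, minus, plus, opp in Hu; simpl in Hu.
  pose proof (Rmin_l (t + PI/2) (PI/2 - t)). pose proof (Rmin_r (t + PI/2) (PI/2 - t)).
  apply Rabs_def2 in Hu. unfold Iv. lra.
Qed.

Lemma Fb_derive b y : rad1 b -> Iv y ->
  is_derive (Fb b) y (2 * sin y * cos y * PSeries (PS_derive b) (sin y ^ 2)).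
Proof.
  intros Hb Hy. unfold Fb.
  eapply is_derive_ext. intros t; reflexivity.
  assert (H := is_derive_comp (PSeries b) (fun t => sin t ^ 2) y _ (2 * sin y * cos y)
                 (is_derive_PSeries b _ (I_inside b y Hb Hy))).
  simpl in H. unfold scal in H; simpl in H. unfold mult in H; simpl in H.
  apply H. auto_derive; auto. ring.
Qed.

Lemma cont_of_derive (f : R -> R) (t l : R) : is_derive f t l -> continuous f t.
Proof. intros H. apply (@ex_derive_continuous R_AbsRing R_NormedModule). exists l; auto. Qed.

Lemma Fb_cont b y : rad1 b -> Iv y -> continuous (Fb b) y.
Proof. intros Hb Hy. eapply cont_of_derive. apply Fb_derive; auto. Qed.

Lemma cont_sin t : continuous sin t.
Proof. apply cont_of_derive with (cos t). auto_derive; auto. ring. Qed.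
Lemma cont_cos t : continuous cos t.
Proof. apply cont_of_derive with (- sin t). auto_derive; auto. ring. Qed.
Lemma cont_tan t : Iv t -> continuous tan t.
Proof.
  intros Ht. pose proof (I_cos t Ht). apply cont_of_derive with (1 + tan t ^ 2).
  unfold tan. auto_derive. lra. field. lra.
Qed.
Lemma cont_sec t : Iv t -> continuous secf t.
Proof.
  intros Ht. pose proof (I_cos t Ht). apply cont_of_derive with (sin t / cos t ^ 2).
  unfold secf. auto_derive. lra. field. lra.
Qed.

Lemma cont_mult (f g : R -> R) t : continuous f t -> continuous g t -> continuous (fun u => f u * g u) t.
Proof. intros. apply (continuous_mult (K := R_AbsRing)); auto. Qed.
Lemma cont_minus (f g : R -> R) t : continuous f t -> continuous g t -> continuous (fun u => f u - g u) t.
Proof. intros. apply (continuous_minus (V := R_NormedModule)); auto. Qed.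
Lemma cont_plus (f g : R -> R) t : continuous f t -> continuous g t -> continuous (fun u => f u + g u) t.
Proof. intros. apply (continuous_plus (V := R_NormedModule)); auto. Qed.
Lemma cont_const (c t : R) : continuous (fun _ => c) t.
Proof. apply continuous_const. Qed.

Lemma ex_RInt_I (f : R -> R) y : Iv y -> (forall t, Iv t -> continuous f t) -> ex_RInt f 0 y.
Proof. intros Hy Hf. apply (@ex_RInt_continuous R_CompleteNormedModule). intros z Hz. apply Hf. eapply I_seg; eauto. Qed.

Definition bnd (b : nat -> R) := forall N, Rabs (b N) <= INR (S N).
Definition div2N (e : nat -> R) := fun N => e N / (2 * INR N).

Lemma bnd_rad1 b : bnd b -> rad1 b.
Proof. apply rad1_bound. Qed.

Lemma bnd_div2N e : bnd e -> bnd (div2N e).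
Proof.
  intros H N. unfold div2N. destruct N.
  - simpl INR. rewrite Rmult_0_r. unfold Rdiv. rewrite Rinv_0, Rmult_0_r, Rabs_R0. lra.
  - assert (1 <= INR (S N)) by (apply (le_INR 1); lia).
    unfold Rdiv. rewrite Rabs_mult. rewrite Rabs_inv. rewrite (Rabs_pos_eq (2 * INR (S N))) by lra.
    specialize (H (S N)). apply Rle_trans with (Rabs (e (S N))); auto.
    rewrite <- (Rmult_1_r (Rabs (e (S N)))) at 2. apply Rmult_le_compat_l. apply Rabs_pos.
    rewrite <- Rinv_1. apply Rinv_le_contravar; lra.
Qed.

Lemma Fb_at0 b : Fb b 0 = b 0%nat.
Proof. unfold Fb. rewrite sin_0. replace (0 ^ 2) with 0 by ring. apply PSeries_0. Qed.

Lemma cot_F_eq e t : e 0%nat = 0 -> rad1 e -> Iv t ->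
  cotf t * Fb e t = sin t * cos t * PSeries (PS_decr_1 e) (sin t ^ 2).
Proof.
  intros H0 He Ht. unfold cotf, Fb.
  destruct (Req_dec (sin t) 0) as [Hs|Hs].
  - rewrite Hs. replace (0 ^ 2) with 0 by ring. rewrite PSeries_0, H0. ring.
  - rewrite PSeries_decr_1. rewrite H0. field. auto.
    apply CV_radius_inside. apply I_inside; auto.
Qed.

Lemma rad1_decr e : rad1 e -> rad1 (PS_decr_1 e).
Proof. unfold rad1. rewrite CV_radius_decr_1. auto. Qed.

Lemma cont_G e t : rad1 e -> Iv t ->
  continuous (fun t => sin t * cos t * PSeries (PS_decr_1 e) (sin t ^ 2)) t.
Proof.
  intros He Ht. apply cont_mult. apply cont_mult. apply cont_sin. apply cont_cos.
  apply (Fb_cont (PS_decr_1 e)); auto. apply rad1_decr; auto.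
Qed.

Lemma L_cot e y : e 0%nat = 0 -> bnd e -> Iv y ->
  RInt (fun t => cotf t * Fb e t) 0 y = Fb (div2N e) y.
Proof.
  intros H0 He Hy. pose proof (bnd_rad1 _ He) as Re.
  set (G := fun t => sin t * cos t * PSeries (PS_decr_1 e) (sin t ^ 2)).
  assert (HG : is_RInt G 0 y (minus (Fb (div2N e) y) (Fb (div2N e) 0))).
  { apply (@is_RInt_derive R_CompleteNormedModule).
    - intros x Hx. assert (Ix := I_seg y x Hy Hx).
      eapply is_derive_ext; [intros; reflexivity|].
      assert (D2 := Fb_derive (div2N e) x (bnd_rad1 _ (bnd_div2N _ He)) Ix).
      replace (G x) with (2 * sin x * cos x * PSeries (PS_derive (div2N e)) (sin x ^ 2)); auto.
      unfold G. rewrite (PSeries_ext (PS_derive (div2N e)) (PS_scal (/2) (PS_decr_1 e))).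
      rewrite PSeries_scal. field.
      intros n. unfold PS_derive, div2N, PS_scal, PS_decr_1. change (scal (/2) (e (S n))) with (/2 * e (S n)).
      assert (0 < INR (S n)) by (apply lt_0_INR; lia). field. lra.
    - intros x Hx. apply cont_G; auto. eapply I_seg; eauto. }
  apply (@is_RInt_unique R_CompleteNormedModule) in HG. rewrite Fb_at0 in HG. unfold div2N at 2 in HG.
  rewrite H0 in HG. unfold Rdiv in HG. rewrite Rmult_0_l in HG.
  unfold minus, plus, opp in HG; simpl in HG. rewrite Ropp_0, Rplus_0_r in HG.
  rewrite <- HG. apply RInt_ext. intros x Hx.
  apply cot_F_eq; auto. apply (I_seg y x Hy). lra.
Qed.

Definition bq (c : nat -> R) N := alpha N * c N.
Definition sq (c : nat -> R) N := alpha N * sm c N.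
Definition wq (c : nat -> R) N := alpha N * sm c N / (2 * INR N - 1).

Lemma exR (a : nat -> R) z : ex_pseries a z -> ex_pseries (V := R_NormedModule) a z.
Proof. auto. Qed.

Lemma exsc (a : nat -> R) c z : ex_pseries a z -> ex_pseries (PS_scal c a) z.
Proof. intros H. apply (ex_pseries_scal (V := R_NormedModule)). unfold mult; simpl; ring. auto. Qed.
Lemma exinc (a : nat -> R) z : ex_pseries a z -> ex_pseries (PS_incr_1 a) z.
Proof. intros H. apply (ex_pseries_incr_1 (V := R_NormedModule)). auto. Qed.
Lemma explus (a b : nat -> R) z : ex_pseries a z -> ex_pseries b z -> ex_pseries (PS_plus a b) z.
Proof. intros H1 H2. apply (ex_pseries_plus (V := R_NormedModule)); auto. Qed.

Lemma PI2 c z : ex_pseries (bq c) z -> ex_pseries (sq c) z ->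
  PSeries (wq c) z = z * PSeries (bq c) z - (1 - z) * PSeries (sq c) z.
Proof.
  intros Hb Hs.
  rewrite <- PSeries_incr_1.
  replace ((1 - z) * PSeries (sq c) z) with (PSeries (sq c) z - z * PSeries (sq c) z) by ring.
  rewrite <- PSeries_incr_1.
  replace (PSeries (PS_incr_1 (bq c)) z - (PSeries (sq c) z - PSeries (PS_incr_1 (sq c)) z))
    with (PSeries (PS_incr_1 (bq c)) z + (-1) * PSeries (sq c) z + PSeries (PS_incr_1 (sq c)) z) by ring.
  rewrite <- PSeries_scal.
  rewrite <- (PSeries_plus (PS_incr_1 (bq c)) (PS_scal (-1) (sq c))).
  2: apply exinc; exact Hb. 2: apply exsc; exact Hs.
  rewrite <- PSeries_plus.
  2: apply explus; [apply exinc; exact Hb| apply exsc; exact Hs]. 2: apply exinc; exact Hs.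
  apply PSeries_ext. intros n. unfold PS_plus, PS_scal, PS_incr_1.
  unfold plus, zero, scal; simpl; unfold mult; simpl.
  destruct n.
  + unfold wq, sq. rewrite sm_0. unfold Rdiv. ring.
  + unfold wq, bq, sq. rewrite sm_S. rewrite alpha_S. rewrite S_INR.
    pose proof (pos_INR n). set (a := alpha n). set (x := INR n) in *. set (u := sm c n). set (v := c n).
    field. split; intro; lra.
Qed.


Lemma PI1 c z : ex_pseries (wq c) z -> ex_pseries (PS_derive (wq c)) z ->
  2 * (1 - z) * PSeries (PS_derive (wq c)) z + PSeries (wq c) z = PSeries (bq c) z.
Proof.
  intros Hw Hd.
  replace (2 * (1 - z) * PSeries (PS_derive (wq c)) z + PSeries (wq c) z) with
    (2 * PSeries (PS_derive (wq c)) z + (-2) * (z * PSeries (PS_derive (wq c)) z) + PSeries (wq c) z) by ring.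
  rewrite <- (PSeries_incr_1 (PS_derive (wq c))).
  rewrite <- (PSeries_scal 2 (PS_derive (wq c))).
  rewrite <- (PSeries_scal (-2) (PS_incr_1 (PS_derive (wq c)))).
  rewrite <- (PSeries_plus (PS_scal 2 (PS_derive (wq c))) (PS_scal (-2) (PS_incr_1 (PS_derive (wq c))))).
  2: apply exsc; exact Hd. 2: apply exsc, exinc; exact Hd.
  rewrite <- PSeries_plus.
  2: apply explus; [apply exsc; exact Hd| apply exsc, exinc; exact Hd]. 2: exact Hw.
  apply PSeries_ext. intros n. unfold PS_plus, PS_scal, PS_incr_1, PS_derive.
  destruct n.
  + unfold plus, zero, scal; simpl; unfold mult; simpl. unfold wq, bq.
    rewrite sm_S, sm_0, alpha_S, alpha_0. simpl INR. field.
  + rewrite !S_INR. unfold plus, zero, scal; simpl; unfold mult; simpl.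
    unfold wq, bq. rewrite !sm_S. rewrite (alpha_S (S n)). rewrite !S_INR.
    pose proof (pos_INR n). set (a := alpha (S n)). set (x := INR n) in *.
    set (u := sm c n). set (v := c n). set (v' := c (S n)).
    field. repeat split; intro; lra.
Qed.

Lemma sm_abs_le c N : (forall i, Rabs (c i) <= 1) -> Rabs (sm c N) <= INR N.
Proof.
  intros H. induction N. rewrite sm_0, Rabs_R0; simpl; lra.
  rewrite sm_S, S_INR. eapply Rle_trans. apply Rabs_triang. specialize (H N). lra.
Qed.

Lemma bnd_bq c : (forall i, Rabs (c i) <= 1) -> bnd (bq c).
Proof.
  intros H N. unfold bq. rewrite Rabs_mult. pose proof (alpha_pos N). pose proof (alpha_le1 N).
  rewrite Rabs_pos_eq by lra. specialize (H N). pose proof (Rabs_pos (c N)).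
  assert (1 <= INR (S N)) by (apply (le_INR 1); lia). nra.
Qed.

Lemma bnd_sq c : (forall i, Rabs (c i) <= 1) -> bnd (sq c).
Proof.
  intros H N. unfold sq. rewrite Rabs_mult. pose proof (alpha_pos N). pose proof (alpha_le1 N).
  rewrite Rabs_pos_eq by lra. pose proof (sm_abs_le c N H). pose proof (Rabs_pos (sm c N)).
  rewrite S_INR. pose proof (pos_INR N). nra.
Qed.

Lemma bnd_wq c : (forall i, Rabs (c i) <= 1) -> bnd (wq c).
Proof.
  intros H N. unfold wq. destruct N.
  - rewrite sm_0. unfold Rdiv. rewrite Rmult_0_r, Rmult_0_l, Rabs_R0. simpl; lra.
  - pose proof (alpha_pos (S N)). pose proof (alpha_le1 (S N)).
    pose proof (sm_abs_le c (S N) H). pose proof (Rabs_pos (sm c (S N))).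
    assert (1 <= INR (S N)) by (apply (le_INR 1); lia).
    unfold Rdiv. rewrite !Rabs_mult, Rabs_inv. rewrite (Rabs_pos_eq (alpha _)) by lra.
    rewrite (Rabs_pos_eq (2 * INR (S N) - 1)) by lra.
    apply Rle_trans with 1. 2: (rewrite S_INR; lra).
    apply Rmult_le_reg_r with (2 * INR (S N) - 1). lra.
    rewrite Rmult_assoc, Rinv_l by lra.
    assert (0 <= (1 - alpha (S N)) * Rabs (sm c (S N))) by (apply Rmult_le_pos; lra).
    nra.
Qed.

Lemma L_J c y : (forall i, Rabs (c i) <= 1) -> Iv y ->
  RInt (fun t => tan t * Fb (bq c) t) 0 y
  - RInt (fun t => cscf t * RInt (fun u => secf u * (tan u * Fb (bq c) u)) 0 t) 0 y
  = Fb (div2N (sq c)) y.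
Proof.
  intros Hc Hy.
  pose proof (bnd_rad1 _ (bnd_bq c Hc)) as Rb.
  pose proof (bnd_rad1 _ (bnd_sq c Hc)) as Rs.
  pose proof (bnd_rad1 _ (bnd_wq c Hc)) as Rw.
  assert (Rdw : rad1 (PS_derive (wq c))) by (unfold rad1; rewrite CV_radius_derive; auto).
  assert (Rint : forall t, Iv t -> RInt (fun u => secf u * (tan u * Fb (bq c) u)) 0 t = Fb (wq c) t / cos t).
  { intros t Ht.
    assert (H : is_RInt (fun u => secf u * (tan u * Fb (bq c) u)) 0 t
                 (minus ((fun t => Fb (wq c) t * / cos t) t) ((fun t => Fb (wq c) t * / cos t) 0))).
    { apply (@is_RInt_derive R_CompleteNormedModule (fun t => Fb (wq c) t * / cos t)).
      - intros x Hx. assert (Ix := I_seg t x Ht Hx). pose proof (I_cos x Ix).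
        assert (D1 := Fb_derive (wq c) x Rw Ix).
        assert (D2 : is_derive (fun t => / cos t) x (sin x / cos x ^ 2)).
        { auto_derive. lra. field. lra. }
        assert (D3 := is_derive_mult _ _ _ _ _ D1 D2 ltac:(intros; apply Rmult_comm)).
        simpl in D3. unfold mult, plus in D3; simpl in D3.
        eapply is_derive_ext; [intros; reflexivity|].
        match goal with |- is_derive _ _ ?l => replace l with
          (2 * sin x * cos x * PSeries (PS_derive (wq c)) (sin x ^ 2) * / cos x +
           Fb (wq c) x * (sin x / cos x ^ 2)) end.
        exact D3.
        pose proof (I_inside _ x Rw Ix) as Iw. pose proof (I_inside _ x Rdw Ix) as Idw.
        pose proof (PI1 c (sin x ^ 2) (CV_radius_inside _ _ Iw) (CV_radius_inside _ _ Idw)) as P1.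
        unfold Fb. rewrite <- P1. unfold secf, tan.
        pose proof (sin2_cos2 x). unfold Rsqr in H0.
        replace (1 - sin x ^ 2) with (cos x ^ 2) by (simpl; lra).
        field. lra.
      - intros x Hx. assert (Ix := I_seg t x Ht Hx).
        apply cont_mult. apply cont_sec; auto. apply cont_mult. apply cont_tan; auto.
        apply Fb_cont; auto. }
    apply (@is_RInt_unique R_CompleteNormedModule) in H. rewrite H.
    unfold minus, plus, opp; simpl. rewrite Fb_at0. unfold wq. rewrite sm_0, cos_0.
    unfold Rdiv. field. pose proof (I_cos t Ht). simpl. split; intro; lra. }
  assert (Rcsc : forall t, Iv t -> cscf t * (Fb (wq c) t / cos t) = tan t * Fb (bq c) t - cotf t * Fb (sq c) t).
  { intros t Ht. pose proof (I_cos t Ht).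
    destruct (Req_dec (sin t) 0) as [Hs|Hs].
    - unfold cscf, cotf, tan, Fb. rewrite Hs. replace (0 ^ 2) with 0 by ring.
      rewrite !PSeries_0. unfold wq, sq. rewrite sm_0. unfold Rdiv. ring.
    - unfold Fb. rewrite PI2.
      2: apply CV_radius_inside, I_inside; auto.
      2: apply CV_radius_inside, I_inside; auto.
      unfold cscf, cotf, tan. pose proof (sin2_cos2 t). unfold Rsqr in H0.
      replace (1 - sin t ^ 2) with (cos t ^ 2) by (simpl; lra).
      field. split; lra. }
  assert (sq0 : sq c 0%nat = 0) by (unfold sq; rewrite sm_0; ring).
  rewrite <- (L_cot (sq c) y sq0 (bnd_sq c Hc) Hy).
  rewrite (RInt_ext (fun t => cscf t * RInt (fun u => secf u * (tan u * Fb (bq c) u)) 0 t)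
                    (fun t => tan t * Fb (bq c) t - cotf t * Fb (sq c) t)).
  2:{ intros x Hx. assert (Ix : Iv x) by (apply (I_seg y x Hy); lra).
      rewrite Rint by auto. apply Rcsc; auto. }
  assert (E1 : ex_RInt (fun t => tan t * Fb (bq c) t) 0 y).
  { apply ex_RInt_I; auto. intros t Ht. apply cont_mult. apply cont_tan; auto. apply Fb_cont; auto. }
  assert (E2 : ex_RInt (fun t => cotf t * Fb (sq c) t) 0 y).
  { apply (ex_RInt_ext (fun t => sin t * cos t * PSeries (PS_decr_1 (sq c)) (sin t ^ 2))).
    intros x Hx. symmetry. apply cot_F_eq; auto. apply (I_seg y x Hy); lra.
    apply ex_RInt_I; auto. intros t Ht. apply cont_G; auto. }
  assert (HM : RInt (fun t => tan t * Fb (bq c) t - cotf t * Fb (sq c) t) 0 y =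
     RInt (fun t => tan t * Fb (bq c) t) 0 y - RInt (fun t => cotf t * Fb (sq c) t) 0 y)
    by exact (RInt_minus (V := R_CompleteNormedModule) _ _ _ _ E1 E2).
  rewrite HM. ring.
Qed.

Lemma sin_lin0 u : 0 <= u <= 1 -> u / 2 <= sin u.
Proof.
  intros H. assert (HP : 1 <= PI) by (pose proof PI2_1; lra).
  pose proof (sin_bound u 0 ltac:(lra) ltac:(lra)) as [H1 _].
  unfold sin_approx, sin_term in H1. simpl in H1.
  replace (1 * (u * 1 / 1) + -1 * 1 * (u * (u * (u * 1)) / (1 + 1 + 1 + 1 + 1 + 1))) with (u - u*u*u/6) in H1 by field.
  assert (u*u*u <= u) by nra. lra.
Qed.
Lemma sin_lin u : Rabs u <= 1 -> Rabs u / 2 <= Rabs (sin u).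
Proof.
  intros H. destruct (Rle_dec 0 u).
  - rewrite Rabs_pos_eq by auto. rewrite Rabs_pos_eq in H by auto.
    pose proof (sin_lin0 u (conj r H)). rewrite Rabs_pos_eq; lra.
  - rewrite Rabs_left in * by lra. pose proof (sin_lin0 (-u) ltac:(lra)).
    rewrite sin_neg in H0. rewrite Rabs_left1; lra.
Qed.

Lemma ball_R x e y : ball x e y <-> Rabs (y - x) < e.
Proof. unfold ball; simpl. unfold AbsRing_ball, abs, minus, plus, opp; simpl. tauto. Qed.

Lemma RInt_bound (phi : R -> R) u M : ex_RInt phi 0 u ->
  (forall s, Rmin 0 u <= s <= Rmax 0 u -> Rabs (phi s) <= M) -> Rabs (RInt phi 0 u) <= Rabs u * M.
Proof.
  intros He Hb. destruct (Rle_dec 0 u).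
  - rewrite (Rabs_pos_eq u) by auto. replace u with (u - 0) at 2 by ring.
    apply abs_RInt_le_const; auto. intros t Ht. apply Hb.
    rewrite Rmin_left, Rmax_right; lra.
  - assert (He' : ex_RInt phi u 0) by (apply (ex_RInt_swap (V := R_CompleteNormedModule)); auto).
    rewrite <- (opp_RInt_swap (V := R_CompleteNormedModule) _ _ _ He'). change (opp ?x) with (- x).
    rewrite Rabs_Ropp. rewrite (Rabs_left u) by lra. replace (-u) with (0 - u) by ring.
    apply abs_RInt_le_const; auto. lra.
    intros t Ht. apply Hb. rewrite Rmin_right, Rmax_left; lra.
Qed.

Definition integrand (w : list (R -> R)) (t : R) : R :=
  match w with [] => 0 | f :: w' => f t * iint w' t end.

Definition good (w : list (R -> R)) : Prop :=
  match w with
  | [] => False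
  | f :: w' => (forall t, Iv t -> continuous (fun u => f u * iint w' u) t) /\ f 0 * iint w' 0 = 0
  end.

Lemma good_int_cont w t : good w -> Iv t -> continuous (integrand w) t.
Proof. destruct w as [|f w']; simpl; [tauto|]. intros [H _] Ht. apply H; auto. Qed.

Lemma good_int0 w : good w -> integrand w 0 = 0.
Proof. destruct w as [|f w']; simpl; tauto. Qed.

Lemma good_iint w y : good w -> iint w y = RInt (integrand w) 0 y.
Proof. destruct w as [|f w']; simpl; tauto. Qed.

Lemma good_derive w y : good w -> Iv y -> is_derive (iint w) y (integrand w y).
Proof.
  intros Hg Hy. destruct w as [|f w']; [simpl in Hg; tauto|].
  change (iint (f :: w')) with (fun y => RInt (fun t => f t * iint w' t) 0 y).
  apply (is_derive_RInt (V := R_CompleteNormedModule) (fun t => f t * iint w' t)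
     (fun y => RInt (fun t => f t * iint w' t) 0 y) 0 y).
  - destruct (I_open y Hy) as [eps Heps]. exists eps. intros b Hb.
    apply (RInt_correct (V := R_CompleteNormedModule)).
    apply ex_RInt_I. apply Heps; auto. intros t Ht. apply Hg; auto.
  - apply Hg; auto.
Qed.

Lemma good_cont w y : good w -> Iv y -> continuous (iint w) y.
Proof. intros. eapply cont_of_derive. apply good_derive; eauto. Qed.

Lemma good_iint0 w : good w -> iint w 0 = 0.
Proof. destruct w as [|f w']; simpl; [tauto|]. intros _. apply (RInt_point (V := R_CompleteNormedModule)). Qed.

Lemma good_cons_reg (f : R -> R) w : good w -> (forall t, Iv t -> continuous f t) -> good (f :: w).
Proof.
  intros Hg Hf. simpl. split.
  - intros t Ht. apply cont_mult; auto. apply good_cont; auto.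
  - rewrite good_iint0; auto. ring.
Qed.

Lemma good_tan w : good w -> good (tan :: w).
Proof. intros. apply good_cons_reg; auto. intros; apply cont_tan; auto. Qed.

Lemma good_sing (f : R -> R) w : (forall u, Rabs (f u * sin u) <= 1) ->
  (forall u, Iv u -> u <> 0 -> continuous f u) -> good w -> good (f :: w).
Proof.
  intros Hb Hf Hg. simpl. split.
  2:{ rewrite good_iint0; auto. ring. }
  intros t Ht. destruct (Req_dec t 0) as [Ht0|Ht0].
  2:{ apply cont_mult; auto. apply good_cont; auto. }
  subst t. apply filterlim_locally. intros eps.
  pose proof (good_int_cont w 0 Hg I_0) as Hc.
  pose proof (proj1 (filterlim_locally (T := R_UniformSpace) (U := R_UniformSpace) (F := locally 0) (integrand w) (integrand w 0)) Hc) as Hc2. clear Hc. rename Hc2 into Hc.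
  assert (He2 : 0 < eps / 4) by (destruct eps; simpl; lra).
  destruct (Hc (mkposreal _ He2)) as [d1 Hd1].
  assert (Hd : 0 < Rmin d1 1) by (apply Rmin_glb_lt; [destruct d1; simpl; lra|lra]).
  exists (mkposreal _ Hd). intros u Hu0.
  assert (Hu : Rabs u < Rmin d1 1) by (rewrite <- (Rminus_0_r u); apply ball_R; exact Hu0). clear Hu0.
  apply ball_R. rewrite good_iint0 by auto. rewrite Rmult_0_r, Rminus_0_r.
  pose proof (Rmin_l d1 1). pose proof (Rmin_r d1 1).
  destruct (Req_dec u 0) as [Hu0|Hu0].
  { subst u. rewrite good_iint0 by auto. rewrite Rmult_0_r, Rabs_R0. destruct eps; simpl; lra. }
  assert (Iu : Iv u) by (unfold Iv; apply Rabs_def2 in Hu; pose proof PI2_1; lra).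
  assert (Hint : Rabs (iint w u) <= Rabs u * (eps / 4)).
  { rewrite good_iint by auto. apply RInt_bound.
    apply ex_RInt_I; auto. intros; apply good_int_cont; auto.
    intros s Hs. specialize (Hd1 s). 
    assert (Hs' : ball 0 d1 s).
    { apply ball_R. rewrite Rminus_0_r. unfold Rmin, Rmax in Hs.
      destruct (Rle_dec 0 u); apply Rabs_def1; apply Rabs_def2 in Hu; lra. }
    specialize (Hd1 Hs').
    assert (H3 : Rabs (integrand w s - integrand w 0) < eps / 4) by (apply ball_R; exact Hd1).
    rewrite good_int0 in H3 by auto. rewrite Rminus_0_r in H3. lra. }
  pose proof (sin_lin u ltac:(lra)) as Hs.
  assert (0 < Rabs u) by (apply Rabs_pos_lt; auto).
  specialize (Hb u). rewrite Rabs_mult in Hb. rewrite Rabs_mult.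
  assert (Hfu : Rabs (f u) * (Rabs u / 2) <= 1).
  { apply Rle_trans with (Rabs (f u) * Rabs (sin u)); auto.
    apply Rmult_le_compat_l; auto. apply Rabs_pos. }
  pose proof (Rabs_pos (f u)). pose proof (Rabs_pos (iint w u)).
  destruct eps as [e epos]; simpl in *.
  apply Rle_lt_trans with (Rabs (f u) * (Rabs u * (e / 4))).
  apply Rmult_le_compat_l; auto.
  replace (Rabs (f u) * (Rabs u * (e / 4))) with ((Rabs (f u) * (Rabs u / 2)) * (e / 2)) by field.
  assert ((Rabs (f u) * (Rabs u / 2)) * (e / 2) <= 1 * (e / 2)) by (apply Rmult_le_compat_r; lra).
  lra.
Qed.

Definition hdw (L : list (R * list (R -> R))) (t : R) : R :=
  fold_right (fun cw acc => fst cw * integrand (snd cw) t + acc) 0 L.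
Definition allgood (L : list (R * list (R -> R))) : Prop := List.Forall (fun cw => good (snd cw)) L.

Lemma hd_cont L t : allgood L -> Iv t -> continuous (hdw L) t.
Proof.
  intros HL Ht. induction HL as [|cw L Hg HL IH]; simpl.
  - apply cont_const.
  - apply cont_plus; auto. apply cont_mult. apply cont_const. apply good_int_cont; auto.
Qed.

Lemma lin_iint_deriv L y : allgood L -> Iv y -> is_derive (lin_iint L) y (hdw L y).
Proof.
  intros HL Hy. induction HL as [|cw L Hg HL IH]; simpl.
  - apply (is_derive_const (K := R_AbsRing) (V := R_NormedModule)).
  - unfold lin_iint; simpl. fold (lin_iint L).
    apply (is_derive_plus (K := R_AbsRing) (V := R_NormedModule) (fun y => fst cw * iint (snd cw) y) (lin_iint L)); auto.
    apply (is_derive_scal (fun y => iint (snd cw) y) y (fst cw)). apply good_derive; auto.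
Qed.

Lemma lin_iint_cons cw L y : lin_iint (cw :: L) y = fst cw * iint (snd cw) y + lin_iint L y.
Proof. reflexivity. Qed.
Lemma lin_iint_nil y : lin_iint [] y = 0.
Proof. reflexivity. Qed.

Lemma lin_iint_0 L : allgood L -> lin_iint L 0 = 0.
Proof.
  intros HL. induction HL as [|cw L Hg HL IH]; auto.
  rewrite lin_iint_cons, IH, good_iint0 by auto. ring.
Qed.

Lemma lin_iint_RInt L y : allgood L -> Iv y -> lin_iint L y = RInt (hdw L) 0 y.
Proof.
  intros HL Hy.
  assert (H : is_RInt (hdw L) 0 y (minus (lin_iint L y) (lin_iint L 0))).
  { apply (@is_RInt_derive R_CompleteNormedModule).
    - intros x Hx. apply lin_iint_deriv; auto. eapply I_seg; eauto.
    - intros x Hx. apply hd_cont; auto. eapply I_seg; eauto. }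
  apply (@is_RInt_unique R_CompleteNormedModule) in H. rewrite H.
  rewrite lin_iint_0 by auto. unfold minus, plus, opp; simpl. ring.
Qed.

Lemma hd_prefix (f : R -> R) X t :
  hdw (map (fun cw => (fst cw, f :: snd cw)) X) t = f t * lin_iint X t.
Proof.
  induction X as [|cw X IH]; cbn [map hdw fold_right]. rewrite lin_iint_nil; ring.
  rewrite lin_iint_cons. fold (hdw (map (fun cw => (fst cw, f :: snd cw)) X) t). rewrite IH. simpl. ring.
Qed.

Lemma hd_app L1 L2 t : hdw (L1 ++ L2) t = hdw L1 t + hdw L2 t.
Proof. induction L1; simpl. ring. rewrite IHL1; ring. Qed.

Lemma lin_iint_app L1 L2 t : lin_iint (L1 ++ L2) t = lin_iint L1 t + lin_iint L2 t.
Proof. induction L1 as [|cw L1 IH]. rewrite app_nil_l, lin_iint_nil; ring.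
  rewrite <- app_comm_cons, !lin_iint_cons, IH; ring. Qed.

Lemma allgood_app L1 L2 : allgood L1 -> allgood L2 -> allgood (L1 ++ L2).
Proof. intros; apply Forall_app; auto. Qed.

Definition mulsec (X : list (R * list (R -> R))) := map (fun cw => (fst cw, mulhead secf (snd cw))) X.

Lemma hd_mulsec X t : allgood X -> hdw (mulsec X) t = secf t * hdw X t.
Proof.
  intros HX. induction HX as [|cw X Hg HX IH]; simpl. ring.
  rewrite IH. destruct cw as [c w]; destruct w as [|f w']; simpl in *. tauto.
  ring.
Qed.

Lemma good_mulsec w : good w -> good (mulhead secf w).
Proof.
  destruct w as [|f w']; simpl; [tauto|]. intros [H1 H2]. split.
  - intros t Ht.
    assert (E : forall u, secf u * (f u * iint w' u) = secf u * f u * iint w' u) by (intros; ring).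
    apply (continuous_ext (T := R_UniformSpace) (U := R_UniformSpace) _ _ _ E).
    apply cont_mult. apply cont_sec; auto. apply H1; auto.
  - rewrite Rmult_assoc, H2. ring.
Qed.

Lemma allgood_mulsec X : allgood X -> allgood (mulsec X).
Proof. intros HX. induction HX; simpl; constructor; auto. apply good_mulsec; auto. Qed.

Lemma allgood_prefix (f : R -> R) X : (forall w, good w -> good (f :: w)) -> allgood X ->
  allgood (map (fun cw => (fst cw, f :: snd cw)) X).
Proof. intros Hf HX. induction HX; simpl; constructor; auto. simpl; apply Hf; auto. Qed.

Lemma cont_cot u : Iv u -> u <> 0 -> continuous cotf u.
Proof.
  intros Hu H0. assert (sin u <> 0).
  { intros Hs. apply H0. destruct Hu. apply sin_eq_0_0 in Hs. destruct Hs as [k Hk].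
    subst u. pose proof PI_RGT_0.
    assert (-1 < IZR k < 1).
    { split; [apply Rmult_lt_reg_r with PI|apply Rmult_lt_reg_r with PI]; lra. }
    assert (k = 0%Z). { destruct H3. apply lt_IZR in H4. apply lt_IZR in H3. lia. }
    subst k. simpl. ring. }
  apply cont_of_derive with (- 1 / sin u ^ 2). unfold cotf. auto_derive. auto.
  pose proof (sin2_cos2 u). unfold Rsqr in H1. field_simplify; auto. rewrite <- H1. field. auto.
Qed.

Lemma cot_sin_bound u : Rabs (cotf u * sin u) <= 1.
Proof.
  unfold cotf. destruct (Req_dec (sin u) 0) as [H|H].
  - rewrite H, Rmult_0_r, Rabs_R0; lra.
  - replace (cos u / sin u * sin u) with (cos u) by (field; auto).
    pose proof (COS_bound u). apply Rabs_le; lra.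
Qed.

Lemma csc_sin_bound u : Rabs (cscf u * sin u) <= 1.
Proof.
  unfold cscf. destruct (Req_dec (sin u) 0) as [H|H].
  - rewrite H, Rmult_0_r, Rabs_R0; lra.
  - rewrite Rinv_l by auto. rewrite Rabs_R1; lra.
Qed.

Lemma sin_nz_I u : Iv u -> u <> 0 -> sin u <> 0.
Proof.
  intros Hu H0 Hs. apply H0. unfold Iv in Hu. destruct Hu as [Ha Hb]. apply sin_eq_0_0 in Hs. destruct Hs as [k Hk].
  subst u. pose proof PI_RGT_0 as Hp.
  assert (Hk : -1 < IZR k < 1).
  { split; [apply Rmult_lt_reg_r with PI|apply Rmult_lt_reg_r with PI]; lra. }
  assert (k = 0%Z). { destruct Hk as [Hk1 Hk2]. apply lt_IZR in Hk1. apply lt_IZR in Hk2. lia. }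
  subst k. simpl. ring.
Qed.

Lemma cont_csc u : Iv u -> u <> 0 -> continuous cscf u.
Proof.
  intros Hu H0. pose proof (sin_nz_I u Hu H0).
  apply cont_of_derive with (- cos u / sin u ^ 2). unfold cscf. auto_derive. auto. field. auto.
Qed.

Lemma good_cot w : good w -> good (cotf :: w).
Proof. apply good_sing. apply cot_sin_bound. apply cont_cot. Qed.
Lemma good_csc w : good w -> good (cscf :: w).
Proof. apply good_sing. apply csc_sin_bound. apply cont_csc. Qed.

Definition prefR (j : nat) (X : list (R * list (R -> R))) :=
  map (fun cw => (fst cw, repeat cotf j ++ snd cw)) X.

Lemma prefR_S j X : prefR (S j) X = map (fun cw => (fst cw, cotf :: snd cw)) (prefR j X).
Proof. unfold prefR. rewrite map_map. reflexivity. Qed.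

Lemma prefR_0 X : prefR 0 X = X.
Proof. unfold prefR. simpl. induction X as [|[c w] X IH]; simpl; congruence. Qed.

Lemma allgood_prefR j X : allgood X -> allgood (prefR j X).
Proof.
  intros HX. induction j. rewrite prefR_0; auto.
  rewrite prefR_S. apply allgood_prefix; auto. apply good_cot.
Qed.

Fixpoint Cit (j : nat) (F : R -> R) : R -> R :=
  match j with O => F | S j' => fun y => RInt (fun t => cotf t * Cit j' F t) 0 y end.

Lemma lin_iint_prefR X j y : allgood X -> Iv y -> lin_iint (prefR j X) y = Cit j (lin_iint X) y.
Proof.
  intros HX. revert y. induction j; intros y Hy.
  - rewrite prefR_0. reflexivity.
  - rewrite prefR_S. rewrite lin_iint_RInt.
    2: apply allgood_prefix; [apply good_cot | apply allgood_prefR; auto].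
    2: auto.
    simpl Cit. apply RInt_ext. intros x Hx. rewrite hd_prefix. rewrite IHj. auto.
    apply (I_seg y x Hy). lra.
Qed.

Lemma Cit_ext j F G y : (forall t, Iv t -> F t = G t) -> Iv y -> Cit j F y = Cit j G y.
Proof.
  intros H. revert y; induction j; intros y Hy; simpl. auto.
  apply RInt_ext. intros x Hx. rewrite IHj; auto. apply (I_seg y x Hy); lra.
Qed.

Definition dj (j : nat) (e : nat -> R) := fun N => e N / (2 * INR N) ^ j.

Lemma bnd_dj j e : e 0%nat = 0 -> bnd e -> bnd (dj j e).
Proof.
  intros H0 He N. unfold dj. destruct N.
  - rewrite H0. unfold Rdiv. rewrite Rmult_0_l, Rabs_R0. simpl; lra.
  - assert (1 <= INR (S N)) by (apply (le_INR 1); lia).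
    assert (1 <= (2 * INR (S N)) ^ j) by (apply pow_R1_Rle; lra).
    unfold Rdiv. rewrite Rabs_mult, Rabs_inv, (Rabs_pos_eq ((2 * INR (S N)) ^ j)) by lra.
    apply Rle_trans with (Rabs (e (S N))); auto.
    rewrite <- (Rmult_1_r (Rabs (e (S N)))) at 2. apply Rmult_le_compat_l. apply Rabs_pos.
    rewrite <- Rinv_1. apply Rinv_le_contravar; lra.
Qed.

Lemma Cit_Fb j e y : e 0%nat = 0 -> bnd e -> Iv y -> Cit j (Fb e) y = Fb (dj j e) y.
Proof.
  intros H0 He. revert y. induction j; intros y Hy.
  - simpl. unfold Fb. apply PSeries_ext. intros N. unfold dj. simpl. field.
  - simpl Cit. rewrite (RInt_ext _ (fun t => cotf t * Fb (dj j e) t)).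
    2:{ intros x Hx. rewrite IHj; auto. apply (I_seg y x Hy); lra. }
    rewrite L_cot; auto.
    + unfold Fb. apply PSeries_ext. intros N. unfold div2N, dj. simpl pow.
      unfold Rdiv. rewrite (Rinv_mult (2 * INR N) ((2 * INR N) ^ j)). ring.
    + unfold dj. rewrite H0. unfold Rdiv; ring.
    + apply bnd_dj; auto.
Qed.

Definition negcsc (W : list (R * list (R -> R))) :=
  map (fun cw => (- fst cw, cscf :: mulhead secf (snd cw))) W.

Lemma lin_iint_negcsc W y :
  lin_iint (negcsc W) y = - lin_iint (map (fun cw => (fst cw, cscf :: snd cw)) (mulsec W)) y.
Proof.
  induction W as [|cw W IH]. unfold negcsc, mulsec; simpl map. rewrite !lin_iint_nil; ring.
  change (negcsc (cw :: W)) with ((- fst cw, cscf :: mulhead secf (snd cw)) :: negcsc W).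
  change (mulsec (cw :: W)) with ((fst cw, mulhead secf (snd cw)) :: mulsec W).
  simpl map. rewrite !lin_iint_cons, IH. simpl. ring.
Qed.

Lemma allgood_negcsc W : allgood W -> allgood (negcsc W).
Proof.
  intros HW. induction HW; simpl; constructor; auto. simpl. apply good_csc, good_mulsec; auto.
Qed.

Lemma expand_cons_eq k s g :
  expand (k :: s) g = map (fun cw => (fst cw, tan :: snd cw))
                        (prefR (k - 1) (expand s g ++ negcsc (expand s g))).
Proof.
  cbn [expand]. unfold prefR, negcsc. rewrite !map_app, !map_map. reflexivity.
Qed.

Definition gn (n : nat) := fun t => a_coef n (sin t) * tan t.
Definition cf (s : list nat) (n : nat) := fun N => Dc (rev s) n N.

Lemma cont_gn n t : Iv t -> continuous (gn n) t.
Proof.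
  intros Ht. unfold gn. apply cont_mult. 2: apply cont_tan; auto.
  unfold a_coef. eapply cont_of_derive. auto_derive. auto. reflexivity.
Qed.

Lemma Fb_single b n t : (forall N, N <> n -> b N = 0) -> Fb b t = b n * (sin t ^ 2) ^ n.
Proof.
  intros H. unfold Fb, PSeries. apply is_series_unique.
  apply (is_series_single (fun k => b k * (sin t ^ 2) ^ k)). intros i Hi. rewrite H; auto. ring.
Qed.

Lemma main_inv n s : List.Forall (fun k => (1 <= k)%nat) s ->
  allgood (expand s (gn n)) /\ forall t, Iv t -> hdw (expand s (gn n)) t = tan t * Fb (bq (cf s n)) t.
Proof.
  induction s as [|k s IH]; intros Hs.
  - split.
    + constructor; [|constructor]. simpl. split.
      * intros t Ht. apply cont_mult. apply cont_gn; auto. apply cont_const.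
      * unfold gn. rewrite tan_0. ring.
    + intros t Ht. simpl. rewrite (Fb_single _ n).
      * unfold bq, cf. simpl. rewrite Nat.eqb_refl. unfold gn. rewrite a_coef_alpha. replace (sin t * (sin t * 1)) with (sin t ^ 2) by ring. ring.
      * intros N HN. unfold bq, cf. simpl. destruct (Nat.eqb_spec N n); [lia|ring].
  - inversion Hs as [|? ? Hk Hs']; subst.
    destruct (IH Hs') as [HW HhW]. clear IH.
    set (W := expand s (gn n)) in *.
    set (c := cf s n).
    assert (Hc : forall i, Rabs (c i) <= 1).
    { intros i. unfold c, cf. pose proof (D_nonneg (rev s) n i).
      pose proof (D_le1 (rev s) n i (Forall_rev Hs')). rewrite Rabs_pos_eq; lra. }
    set (X2 := W ++ negcsc W).
    assert (HX2 : allgood X2) by (apply allgood_app; auto; apply allgood_negcsc; auto).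
    set (Kq := div2N (sq c)).
    assert (LX2 : forall u, Iv u -> lin_iint X2 u = Fb Kq u).
    { intros u Hu. unfold X2, Kq. rewrite lin_iint_app, lin_iint_negcsc.
      rewrite <- (L_J c u Hc Hu).
      rewrite (lin_iint_RInt W) by auto.
      rewrite (lin_iint_RInt (map _ (mulsec W))).
      2: apply allgood_prefix; [apply good_csc| apply allgood_mulsec; auto].
      2: auto.
      assert (E1 : RInt (hdw W) 0 u = RInt (fun t => tan t * Fb (bq c) t) 0 u).
      { apply RInt_ext. intros x Hx. apply HhW. apply (I_seg u x Hu); lra. }
      assert (E2 : RInt (hdw (map (fun cw => (fst cw, cscf :: snd cw)) (mulsec W))) 0 u =
                   RInt (fun t => cscf t * RInt (fun v => secf v * (tan v * Fb (bq c) v)) 0 t) 0 u).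
      { apply RInt_ext. intros x Hx. assert (Ix : Iv x) by (apply (I_seg u x Hu); lra).
        rewrite hd_prefix. f_equal.
        rewrite lin_iint_RInt by (auto; apply allgood_mulsec; auto).
        apply RInt_ext. intros v Hv. assert (Iv : Iv v) by (apply (I_seg x v Ix); lra).
        rewrite hd_mulsec by auto. rewrite HhW; auto. }
      rewrite E1, E2. ring. }
    split.
    + rewrite expand_cons_eq. fold W. apply allgood_prefix. apply good_tan.
      apply allgood_prefR. auto.
    + intros t Ht. rewrite expand_cons_eq. fold W. fold X2. rewrite hd_prefix.
      rewrite lin_iint_prefR by auto.
      rewrite (Cit_ext _ _ (Fb Kq)) by auto.
      rewrite Cit_Fb; auto.
      * f_equal. unfold Fb. apply PSeries_ext. intros N.
        unfold dj, Kq, div2N, sq, bq, cf. simpl rev. rewrite D_app. fold c.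
        destruct k as [|k']; [lia|]. simpl Nat.sub. rewrite Nat.sub_0_r.
        simpl pow. unfold Rdiv. rewrite (Rinv_mult (2 * INR N) ((2 * INR N) ^ k')). change (sm (Dc (rev s) n) N) with (sm c N). ring.
      * unfold Kq, div2N, sq. rewrite sm_0. unfold Rdiv; ring.
      * apply bnd_div2N, bnd_sq; auto.
Qed.

Lemma bernoulli z k : 0 <= z <= 1 -> 1 - INR k * (1 - z) <= z ^ k.
Proof.
  intros Hz. induction k. simpl; lra.
  rewrite S_INR. simpl pow. pose proof (pos_INR k).
  assert (z * (1 - INR k * (1 - z)) <= z * z ^ k) by (apply Rmult_le_compat_l; lra).
  assert (0 <= INR k * ((1 - z) * (1 - z))) by (apply Rmult_le_pos; nra).
  nra.
Qed.

Lemma abel b : (forall N, 0 <= b N) -> ex_series b -> forall eps, 0 < eps ->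
  exists d, 0 < d /\ forall z, 0 <= z <= 1 -> 1 - d < z -> Rabs (PSeries b z - Series b) < eps.
Proof.
  intros Hp Hex eps He.
  pose proof (Series_correct _ Hex) as HT. set (T := Series b) in *.
  assert (HT' := HT). apply is_series_sm in HT'. apply is_lim_seq_spec in HT'.
  assert (He2 : 0 < eps / 2) by lra.
  destruct (HT' (mkposreal _ He2)) as [K HK]. specialize (HK K (le_n K)). simpl in HK.
  pose proof (sm_le_lim b T K HT Hp) as HKT.
  set (M := sm (fun N => b N * INR N) K).
  assert (HM : 0 <= M) by (apply sm_nonneg; intros; apply Rmult_le_pos; auto; apply pos_INR).
  exists (eps / (2 * (M + 1))). split. apply Rdiv_lt_0_compat; lra.
  intros z Hz Hdz.
  assert (Hbz : forall k, 0 <= b k * z ^ k <= b k).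
  { intros k. pose proof (pow_le1 z k Hz). specialize (Hp k). split; [apply Rmult_le_pos; lra| nra]. }
  assert (Hexz : ex_series (fun k => b k * z ^ k)).
  { apply (@ex_series_le R_AbsRing R_CompleteNormedModule _ b); auto.
    intros k. change (norm ?x) with (Rabs x). rewrite Rabs_pos_eq; apply Hbz. }
  assert (Up : PSeries b z <= T).
  { unfold PSeries. apply Series_le; auto. }
  assert (Lo1 : sm (fun k => b k * z ^ k) K <= PSeries b z).
  { apply sm_le_lim. apply Series_correct; auto. intros; apply Hbz. }
  assert (Lo2 : sm b K - (1 - z) * M <= sm (fun k => b k * z ^ k) K).
  { unfold M. rewrite <- sm_scal.
    replace (sm b K - sm (fun i => (1 - z) * (b i * INR i)) K)
      with (sm (fun i => b i + (- (1 - z)) * (b i * INR i)) K)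
      by (rewrite sm_plus, sm_scal, sm_scal; ring).
    apply sm_le. intros i. pose proof (bernoulli z i Hz). specialize (Hp i).
    assert (b i * (1 - INR i * (1 - z)) <= b i * z ^ i) by (apply Rmult_le_compat_l; lra).
    nra. }
  assert (Hd : (1 - z) * M <= eps / 2).
  { apply Rle_trans with (eps / (2 * (M + 1)) * M). apply Rmult_le_compat_r; lra.
    apply Rmult_le_reg_r with (2 * (M + 1)). lra.
    replace (eps / (2 * (M + 1)) * M * (2 * (M + 1))) with (eps * M) by (field; lra).
    nra. }
  apply Rabs_def1. lra. apply Rabs_def2 in HK. lra.
Qed.

Lemma msum_eq s n x : List.Forall (fun k => (1 <= k)%nat) s -> x ^ 2 <= 1 ->
  msum s x n = PSeries (bq (cf s n)) (x ^ 2).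
Proof.
  intros Hs Hx. unfold msum.
  rewrite <- (is_series_unique _ _ (interchange (rev s) (Forall_rev Hs) n x Hx)).
  unfold PSeries. apply Series_ext. intros N. unfold bq, cf. rewrite a_coef_alpha. ring.
Qed.

Lemma cf_0 s n : s <> [] -> cf s n 0%nat = 0.
Proof.
  intros H. destruct s as [|k s]; [congruence|]. unfold cf. simpl rev. rewrite D_app.
  rewrite sm_0. unfold Rdiv; ring.
Qed.

Lemma rhs_eq s n y : s <> [] -> List.Forall (fun k => (1 <= k)%nat) s -> Iv y ->
  rhs s n y = Fb (bq (cf s n)) y.
Proof.
  intros Hne Hs Hy. destruct (main_inv n s Hs) as [Hg Hh].
  unfold rhs. change (fun t => a_coef n (sin t) * tan t) with (gn n).
  rewrite (is_derive_unique _ _ _ (lin_iint_deriv _ y Hg Hy)).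
  rewrite Hh by auto.
  destruct (Req_dec y 0) as [H0|H0].
  - subst y. rewrite Fb_at0. unfold bq. rewrite cf_0 by auto. rewrite tan_0. ring.
  - pose proof (sin_nz_I y Hy H0). pose proof (I_cos y Hy).
    unfold cotf, tan. field. split; lra.
Qed.

Lemma near_cos a : cos a = 0 -> forall d, 0 < d -> exists eta, 0 < eta /\
  forall y, Rabs (y - a) < eta -> 1 - d < sin y ^ 2.
Proof.
  intros Ha d Hd. pose proof (cont_cos a) as Hc.
  pose proof (proj1 (filterlim_locally (T := R_UniformSpace) (U := R_UniformSpace) (F := locally a) cos (cos a)) Hc) as Hc2.
  assert (Hd' : 0 < Rmin d 1) by (apply Rmin_glb_lt; lra).
  destruct (Hc2 (mkposreal _ Hd')) as [eta Heta].
  exists eta. split. destruct eta; simpl; lra.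
  intros y Hy. assert (Hb : ball a eta y) by (apply ball_R; auto).
  specialize (Heta y Hb). assert (H2 : Rabs (cos y - cos a) < Rmin d 1) by (apply ball_R; exact Heta).
  rewrite Ha, Rminus_0_r in H2. simpl in H2.
  pose proof (Rmin_l d 1). pose proof (Rmin_r d 1).
  pose proof (sin2_cos2 y) as Hsc. unfold Rsqr in Hsc.
  apply Rabs_def2 in H2.
  assert (cos y * cos y < d) by nra. simpl. lra.
Qed.

Theorem theorem2p1 :
  forall (n : nat) (s : list nat),
    s <> nil -> List.Forall (fun k => (1 <= k)%nat) s ->
    (forall y : R, - (PI / 2) < y < PI / 2 -> msum s (sin y) n = rhs s n y) /\
    filterlim (rhs s n) (at_left (PI / 2)) (locally (msum s (sin (PI / 2)) n)) /\
    filterlim (rhs s n) (at_right (- (PI / 2))) (locally (msum s (sin (- (PI / 2))) n)).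
Proof.
  intros n s Hne Hs.
  set (b := bq (cf s n)).
  assert (Hbp : forall N, 0 <= b N).
  { intros N. unfold b, bq, cf. apply Rmult_le_pos. left; apply alpha_pos. apply D_nonneg. }
  assert (Hbex : ex_series b).
  { exists (msum s 1 n). unfold msum.
    assert (H := interchange (rev s) (Forall_rev Hs) n 1 ltac:(lra)).
    assert (E : forall N, a_coef N 1 * Dc (rev s) n N = b N).
    { intros N. unfold b, bq, cf. rewrite a_coef_alpha. rewrite pow1, pow1. ring. }
    exact (is_series_ext _ _ _ E H). }
  assert (HT : forall x, x ^ 2 = 1 -> msum s x n = Series b).
  { intros x Hx. rewrite msum_eq by (auto; lra). rewrite Hx. unfold PSeries.
    apply Series_ext. intros N. rewrite pow1. fold b. ring. }
  split; [|split].
  - intros y Hy. rewrite rhs_eq by auto. rewrite msum_eq; auto.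
    pose proof (I_sin2 y Hy); lra.
  - rewrite HT by (rewrite sin_PI2; ring).
    apply filterlim_locally. intros eps.
    destruct (abel b Hbp Hbex eps (cond_pos eps)) as [d [Hd Hdz]].
    destruct (near_cos (PI / 2) cos_PI2 d Hd) as [eta [Heta Hnear]].
    assert (He : 0 < Rmin eta PI) by (apply Rmin_glb_lt; auto; apply PI_RGT_0).
    exists (mkposreal _ He). intros y Hy Hlt.
    assert (Hy' : Rabs (y - PI / 2) < Rmin eta PI) by (apply ball_R; exact Hy).
    pose proof (Rmin_l eta PI). pose proof (Rmin_r eta PI).
    assert (Iy : Iv y) by (unfold Iv; apply Rabs_def2 in Hy'; lra).
    apply ball_R. rewrite rhs_eq by auto. fold b. unfold Fb. apply Hdz.
    pose proof (I_sin2 y Iy); lra. apply Hnear; lra.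
  - rewrite HT by (rewrite sin_neg, sin_PI2; ring).
    apply filterlim_locally. intros eps.
    destruct (abel b Hbp Hbex eps (cond_pos eps)) as [d [Hd Hdz]].
    destruct (near_cos (- (PI / 2)) ltac:(rewrite cos_neg; apply cos_PI2) d Hd) as [eta [Heta Hnear]].
    assert (He : 0 < Rmin eta PI) by (apply Rmin_glb_lt; auto; apply PI_RGT_0).
    exists (mkposreal _ He). intros y Hy Hlt.
    assert (Hy' : Rabs (y - - (PI / 2)) < Rmin eta PI) by (apply ball_R; exact Hy).
    pose proof (Rmin_l eta PI). pose proof (Rmin_r eta PI).
    assert (Iy : Iv y) by (unfold Iv; apply Rabs_def2 in Hy'; lra).
    apply ball_R. rewrite rhs_eq by auto. fold b. unfold Fb. apply Hdz.
    pose proof (I_sin2 y Iy); lra. apply Hnear; lra.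
Qed.
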